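(* Let $G=(V,A)$ be a weighted digraph with $V=\{1,\dots,n\}$, positive arc weights and every vertex of positive degree, and fix $p\in[1,\infty]$. Let $\Omega=\Omega_p^1\cup\Omega_p^2$ where $\Omega_p^1=\{\mathbf{x}\in\mathbb{R}^n:\max_i x_i+\min_i x_i=0,\ \|\mathbf{x}\|_p=1\}$ and $\Omega_p^2=\{\mathbf{x}\in\mathbb{R}^n:\min_i|x_i|=0,\ \|\mathbf{x}\|_p=1\}$. Starting from $\mathbf{x}^1\in\Omega$ and $r^1=r(\mathbf{x}^1)$, define iteratively $$\mathbf{x}^{k+1}\in\operatorname*{argmin}_{\mathbf{x}\in\Omega}\big\{\|\mathbf{x}\|_\infty-Q_{r^k}(\mathbf{x})\big\},\qquad r^{k+1}=r(\mathbf{x}^{k+1}).$$ Then the sequence $\{r^k\}$ converges to the global minimum $r_{\min}=\min_{\mathbf{x}\in\mathbb{R}^n\setminus\{t\mathbf{1}:t\in\mathbb{R}\}} r(\mathbf{x})$.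
   Context: For a vertex $v$, $d_v^+$ and $d_v^-$ are the total weights of arcs leaving and entering $v$; $d_v=d_v^++d_v^-$, $d_v^\delta=d_v^+-d_v^-$, $\mathrm{Vol}(V)=\sum_{v}d_v$. For $\mathbf{x}\in\mathbb{R}^n$: $I^+(\mathbf{x})=\sum_{i\to j\in A}w_{ij}|x_i+x_j|$, $J(\mathbf{x})=|\sum_{i\in V}d_i^\delta x_i|$, $N(\mathbf{x})=\min_{c\in\mathbb{R}}\sum_{i\in V}d_i|x_i-c|$; for non-constant $\mathbf{x}$, $r(\mathbf{x})=\frac{\mathrm{Vol}(V)\|\mathbf{x}\|_\infty-I^+(\mathbf{x})-J(\mathbf{x})}{2N(\mathbf{x})}$; and for $r\in\mathbb{R}$, $Q_r(\mathbf{x})=\frac{I^+(\mathbf{x})+J(\mathbf{x})+2rN(\mathbf{x})}{\mathrm{Vol}(V)}$. (Vectors in $\Omega$ are non-constant.) *)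

(* Defs.v *)
From HB Require Import structures.
From mathcomp Require Import all_boot all_order all_algebra.
From mathcomp Require Import all_classical all_reals all_analysis.
Set Implicit Arguments. Unset Strict Implicit. Unset Printing Implicit Defensive.
Import Order.TTheory GRing.Theory Num.Theory.
Import numFieldNormedType.Exports.
Local Open Scope ring_scope.
Local Open Scope classical_set_scope.

Section Digraph.
Variables (R : realType) (n : nat).
(* weighted digraph on V = 'I_n : w i j > 0 iff i -> j is an arc (of weight w i j),
   w i j = 0 iff there is no arc *)
Variable w : 'I_n -> 'I_n -> R.

Definition dout (v : 'I_n) : R := \sum_(j < n) w v j.
Definition din (v : 'I_n) : R := \sum_(i < n) w i v.
Definition deg (v : 'I_n) : R := dout v + din v.
Definition ddelta (v : 'I_n) : R := dout v - din v.
Definition Vol : R := \sum_(v < n) deg v.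

Definition Iplus (x : 'I_n -> R) : R :=
  \sum_(i < n) \sum_(j < n) w i j * `|x i + x j|.
Definition Jf (x : 'I_n -> R) : R := `|\sum_(i < n) ddelta i * x i|.
Definition Nf (x : 'I_n -> R) : R :=
  inf (range (fun c : R => \sum_(i < n) deg i * `|x i - c|)).

Definition ninf (x : 'I_n -> R) : R := \big[Num.max/0]_(i < n) `|x i|.

Definition rfun (x : 'I_n -> R) : R :=
  (Vol * ninf x - Iplus x - Jf x) / (2 * Nf x).
Definition Qfun (r : R) (x : 'I_n -> R) : R :=
  (Iplus x + Jf x + 2 * r * Nf x) / Vol.
End Digraph.

Definition nonconstant (R : realType) (n : nat) (x : 'I_n -> R) : Prop :=
  ~ (exists t : R, forall i, x i = t).

(* p-norm, p in [1, +oo] encoded as an extended real *)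
Definition pnorm (R : realType) (n : nat) (p : \bar R) (x : 'I_n -> R) : R :=
  match p with
  | EFin q => (\sum_(i < n) `|x i| `^ q) `^ q^-1
  | _ => ninf x
  end.

Definition is_maxv (R : realType) (n : nat) (x : 'I_n -> R) (m : R) : Prop :=
  (exists i, x i = m) /\ (forall i, x i <= m).
Definition is_minv (R : realType) (n : nat) (x : 'I_n -> R) (m : R) : Prop :=
  (exists i, x i = m) /\ (forall i, m <= x i).

Definition Omega1 (R : realType) (n : nat) (p : \bar R) : set ('I_n -> R) :=
  [set x | (exists M m, is_maxv x M /\ is_minv x m /\ M + m = 0) /\ pnorm p x = 1].
Definition Omega2 (R : realType) (n : nat) (p : \bar R) : set ('I_n -> R) :=
  [set x | is_minv (fun i => `|x i|) 0 /\ pnorm p x = 1].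
Definition Omega (R : realType) (n : nat) (p : \bar R) : set ('I_n -> R) :=
  Omega1 p `|` Omega2 p.

(* Main.v *)
Require Import Defs.
From HB Require Import structures.
From mathcomp Require Import all_boot all_order all_algebra.
From mathcomp Require Import all_classical all_reals all_analysis.
From mathcomp Require Import ring lra.
Import Order.TTheory GRing.Theory Num.Theory.
Import numFieldNormedType.Exports.
Local Open Scope ring_scope.
Local Open Scope classical_set_scope.

Section Main.
Variables (R : realType) (n : nat) (w : 'I_n -> 'I_n -> R) (p : \bar R).
Hypothesis hp : (1 <= p)%E.
Hypothesis hw : forall i j, 0 <= w i j.
Hypothesis hdeg : forall v, 0 < deg w v.
Implicit Types x y : 'I_n -> R.

Lemma eqle (a b : R) : a = b -> a <= b. Proof. by move->. Qed.

Definition phi (x : 'I_n -> R) (c : R) := \sum_(i < n) deg w i * `|x i - c|.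

Lemma deg_ge0 i : 0 <= deg w i. Proof. exact: ltW. Qed.

Lemma phi_ge0 x c : 0 <= phi x c.
Proof. by apply: sumr_ge0 => i _; rewrite mulr_ge0 ?deg_ge0. Qed.

Lemma phi_lb x : has_lbound (range (phi x)).
Proof. by exists 0 => _ [c _ <-]; exact: phi_ge0. Qed.

Lemma Nf_le x c : Nf w x <= phi x c.
Proof. by apply: (ge_inf (phi_lb x)); exists c. Qed.

Lemma Nf_ge x a : (forall c, a <= phi x c) -> a <= Nf w x.
Proof.
move=> H; apply: lb_le_inf; first by exists (phi x 0), 0.
by move=> _ [c _ <-]; exact: H.
Qed.

Lemma Nf_ge0 x : 0 <= Nf w x.
Proof. by apply: Nf_ge => c; exact: phi_ge0. Qed.

Lemma Nf_trans x t : Nf w (fun i => x i - t) = Nf w x.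
Proof.
apply/le_anti/andP; split.
  apply: Nf_ge => c; rewrite (le_trans (Nf_le _ (c - t)))//.
  by apply/eqle/eq_bigr => i _; congr (_ * `|_|); ring.
apply: Nf_ge => c; rewrite (le_trans (Nf_le _ (c + t)))//.
by apply/eqle/eq_bigr => i _; congr (_ * `|_|); ring.
Qed.

Lemma Nf_scale x l : 0 < l -> Nf w (fun i => l * x i) = l * Nf w x.
Proof.
move=> l0; apply/le_anti/andP; split.
  rewrite -ler_pdivrMl//; apply: Nf_ge => c; rewrite ler_pdivrMl//.
  rewrite (le_trans (Nf_le _ (l * c)))// /phi mulr_sumr.
  apply/eqle/eq_bigr => i _; rewrite -mulrBr normrM (gtr0_norm l0); ring.
apply: Nf_ge => c; rewrite (le_trans (ler_wpM2l (ltW l0) (Nf_le x (c / l))))//.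
rewrite /phi mulr_sumr; apply/eqle/eq_bigr => i _.
rewrite mulrCA -(gtr0_norm l0) -normrM mulrBr (gtr0_norm l0) mulrCA divff ?gt_eqF// mulr1; reflexivity.
Qed.

Lemma Nf_const t : Nf w (fun=> t) = 0.
Proof.
apply/le_anti; rewrite Nf_ge0 andbT (le_trans (Nf_le _ t))//.
by rewrite /phi big1 // => i _; rewrite subrr normr0 mulr0.
Qed.

Lemma phi_single x c a : deg w a * `|x a - c| <= phi x c.
Proof.
rewrite /phi (bigD1 a) //= lerDl; apply: sumr_ge0 => i _.
by rewrite mulr_ge0 ?deg_ge0.
Qed.

Definition dmin := \big[Num.min/1]_(i < n) deg w i.
Lemma dmin_gt0 : 0 < dmin.
Proof. by apply: lt_bigmin => // i _; exact: hdeg. Qed.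
Lemma dmin_le i : dmin <= deg w i.
Proof. exact: bigmin_le. Qed.

Lemma Nf_lb2 x a b : dmin * `|x a - x b| / 2 <= Nf w x.
Proof.
apply: Nf_ge => c.
have h1 := phi_single x c a; have h2 := phi_single x c b.
have e1 : dmin * `|x a - c| <= deg w a * `|x a - c| by rewrite ler_wpM2r ?dmin_le.
have e2 : dmin * `|x b - c| <= deg w b * `|x b - c| by rewrite ler_wpM2r ?dmin_le.
have e3 : `|x a - x b| <= `|x a - c| + `|x b - c|.
  by rewrite (distrC (x b)); exact: ler_distD.
have := dmin_gt0 => d0.
rewrite ler_pdivrMr//; apply: (le_trans (ler_wpM2l (ltW d0) e3)); rewrite mulrDr; lra.
Qed.

Lemma sum_ddelta : \sum_(i < n) ddelta w i = 0.
Proof.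
rewrite /ddelta sumrB /dout /din.
by rewrite [X in _ - X]exchange_big /= subrr.
Qed.

Lemma Vol2 : Vol w = 2 * \sum_(i < n) \sum_(j < n) w i j.
Proof.
rewrite /Vol /deg big_split /= /dout /din [X in _ + X]exchange_big /=; ring.
Qed.


Lemma ninf_ge x i : `|x i| <= ninf x.
Proof. exact: le_bigmax. Qed.

Lemma ninf_le x t : 0 <= t -> (forall i, `|x i| <= t) -> ninf x <= t.
Proof. by move=> t0 H; apply: bigmax_le. Qed.

Lemma ninf_ge0 x : 0 <= ninf x.
Proof. by rewrite /ninf; elim/big_ind: _ => // a b ha hb; rewrite le_max ha. Qed.

Lemma ninf_scale x l : 0 < l -> ninf (fun i => l * x i) = l * ninf x.
Proof.
move=> l0; apply/le_anti/andP; split.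
  apply: ninf_le; first by rewrite mulr_ge0 ?ninf_ge0 ?ltW.
  by move=> i /=; rewrite normrM (gtr0_norm l0) ler_wpM2l ?ninf_ge // ltW.
rewrite -ler_pdivlMl//; apply: ninf_le.
  by rewrite mulr_ge0 ?ninf_ge0 ?invr_ge0 ?ltW.
move=> i; rewrite ler_pdivlMl// -(gtr0_norm l0) -normrM (gtr0_norm l0).
exact: (ninf_ge (fun i => l * x i)).
Qed.

Lemma ninf_lip x y d : 0 <= d -> (forall i, `|x i - y i| <= d) -> ninf x <= ninf y + d.
Proof.
move=> d0 H; apply: ninf_le; first by rewrite addr_ge0 ?ninf_ge0.
move=> i; apply: (le_trans (_ : _ <= `|y i| + `|x i - y i|)).
  by rewrite (le_trans _ (ler_normD _ _))// addrC subrK.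
by rewrite lerD ?ninf_ge ?H.
Qed.

Lemma Iplus_scale x l : 0 <= l -> Iplus w (fun i => l * x i) = l * Iplus w x.
Proof.
move=> l0; rewrite /Iplus mulr_sumr; apply: eq_bigr => i _.
rewrite mulr_sumr; apply: eq_bigr => j _.
by rewrite -mulrDr normrM (ger0_norm l0) mulrCA.
Qed.

Lemma Jf_scale x l : 0 <= l -> Jf w (fun i => l * x i) = l * Jf w x.
Proof.
move=> l0; rewrite /Jf -(ger0_norm l0) -normrM mulr_sumr; congr `|_|.
by apply: eq_bigr => i _; rewrite (ger0_norm l0) mulrCA.
Qed.

Lemma Jf_trans x t : Jf w (fun i => x i - t) = Jf w x.
Proof.
rewrite /Jf; congr `|_|.
under eq_bigr do rewrite mulrBr.
by rewrite sumrB -mulr_suml sum_ddelta mul0r subr0.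
Qed.

Lemma Iplus_lip x y d : (forall i, `|x i - y i| <= d) ->
  Iplus w x <= Iplus w y + Vol w * d.
Proof.
move=> H.
have -> : Vol w * d = \sum_i \sum_j (w i j * (2 * d)).
  rewrite Vol2 (mulrC 2) -mulrA mulr_suml; apply: eq_bigr => i _.
  by rewrite mulr_suml.
rewrite /Iplus -big_split /=; apply: ler_sum => i _.
rewrite -big_split /=; apply: ler_sum => j _.
rewrite -mulrDr ler_wpM2l ?hw//.
apply: (le_trans (_ : _ <= `|y i + y j| + `|(x i - y i) + (x j - y j)|)).
  by rewrite (le_trans _ (ler_normD _ _))//; apply/eqle; congr `|_|; ring.
rewrite lerD2l (le_trans (ler_normD _ _))//.
by have := H i; have := H j; lra.
Qed.

Definition sdd := \sum_(i < n) `|ddelta w i|.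

Lemma Jf_lip x y d : (forall i, `|x i - y i| <= d) ->
  Jf w x <= Jf w y + sdd * d.
Proof.
move=> H; rewrite /Jf /sdd mulr_suml.
apply: (le_trans (_ : _ <= `|\sum_i ddelta w i * y i| + `|\sum_i ddelta w i * (x i - y i)|)).
  rewrite (le_trans _ (ler_normD _ _))//; apply/eqle; congr `|_|.
  by rewrite -big_split; apply: eq_bigr => i _ /=; ring.
rewrite lerD2l (le_trans (ler_norm_sum _ _ _))//; apply: ler_sum => i _.
by rewrite normrM ler_wpM2l ?H.
Qed.

Lemma Nf_lip x y d : (forall i, `|x i - y i| <= d) ->
  Nf w x <= Nf w y + Vol w * d.
Proof.
move=> H; rewrite -lerBlDr; apply: Nf_ge => c; rewrite lerBlDr.
apply: (le_trans (Nf_le x c)); rewrite /phi /Vol mulr_suml -big_split /=.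
apply: ler_sum => i _; rewrite -mulrDr ler_wpM2l ?deg_ge0//.
apply: (le_trans (_ : _ <= `|y i - c| + `|x i - y i|)).
  by rewrite (le_trans _ (ler_normD _ _))//; apply/eqle; congr `|_|; ring.
by rewrite lerD2l H.
Qed.

Lemma ex_max (f : 'I_n -> R) (a : 'I_n) : exists i0, forall i, f i <= f i0.
Proof. by case: (@arg_maxP _ _ _ a predT f isT) => i0 _ H; exists i0 => i; exact: H. Qed.

Lemma ex_min (f : 'I_n -> R) (a : 'I_n) : exists i0, forall i, f i0 <= f i.
Proof. by case: (@arg_minP _ _ _ a predT f isT) => i0 _ H; exists i0 => i; exact: H. Qed.


Lemma nc_ex x : nonconstant x -> exists a b, x a < x b.
Proof.
move=> nc; apply: contrapT => H; apply: nc.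
case: (pselect (exists i : 'I_n, True)) => [[a _]|N0].
  exists (x a) => i; apply/le_anti/andP; split; rewrite leNgt; apply/negP => lt.
    by apply: H; exists a, i.
  by apply: H; exists i, a.
by exists 0 => i; exfalso; apply: N0; exists i.
Qed.

Lemma Nf_pos x : nonconstant x -> 0 < Nf w x.
Proof.
move=> /nc_ex [a [b ab]]; apply: lt_le_trans (Nf_lb2 x a b).
by rewrite divr_gt0// mulr_gt0 ?dmin_gt0// normr_gt0 subr_eq0 lt_eqF.
Qed.

Lemma nc_of_Nf x : 0 < Nf w x -> nonconstant x.
Proof.
move=> N0 [t Ht]; have : x = fun=> t by apply: funext.
by move=> E; move: N0; rewrite E Nf_const ltxx.
Qed.

Definition num x := Vol w * ninf x - Iplus w x - Jf w x.

Lemma rfunE x : rfun w x = num x / (2 * Nf w x).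
Proof. by []. Qed.

Lemma r_scale x l : 0 < l -> rfun w (fun i => l * x i) = rfun w x.
Proof.
move=> l0; rewrite !rfunE /num ninf_scale ?Iplus_scale ?Jf_scale ?Nf_scale ?ltW//.
have -> : Vol w * (l * ninf x) - l * Iplus w x - l * Jf w x =
  l * (Vol w * ninf x - Iplus w x - Jf w x) by ring.
have -> : 2 * (l * Nf w x) = l * (2 * Nf w x) by ring.
by rewrite invfM mulrACA divff ?gt_eqF// mul1r.
Qed.

Definition Shape1 x := exists M m, is_maxv x M /\ is_minv x m /\ M + m = 0.

Lemma shape_scale x l : 0 < l -> Shape1 x -> Shape1 (fun i => l * x i).
Proof.
move=> l0 [M [m [[[i Hi] HM] [[[j Hj] Hm] HMm]]]].
exists (l * M), (l * m); split; [|split].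
- by split; [exists i; rewrite Hi | move=> k; rewrite ler_wpM2l ?HM ?ltW].
- by split; [exists j; rewrite Hj | move=> k; rewrite ler_wpM2l ?Hm ?ltW].
- by rewrite -mulrDr HMm mulr0.
Qed.

Lemma reduction x : nonconstant x -> exists y,
  [/\ ninf y = 1, dmin <= Nf w y, rfun w y <= rfun w x & Shape1 y].
Proof.
move=> nc; have [a [b ab]] := nc_ex x nc.
have [iM HM] := ex_max x a; have [im Hm] := ex_min x a.
set M := x iM; set m := x im; set h := (M + m) / 2.
have mM : m < M by apply: (le_lt_trans (Hm a)); apply: (lt_le_trans ab (HM b)).
pose x' := fun i => x i - h.
have N0 := Nf_pos x nc.
have Nx' : Nf w x' = Nf w x by rewrite /x' Nf_trans.
have nix' : ninf x' = (M - m) / 2.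
  apply/le_anti/andP; split.
    apply: ninf_le; first by rewrite divr_ge0// subr_ge0 ltW.
    move=> i; rewrite /x' ler_norml; have := HM i; have := Hm i.
    rewrite -/M -/m /h => h1 h2; apply/andP; split; lra.
  apply: le_trans (ninf_ge x' iM); rewrite /x' /h.
  rewrite (le_trans _ (ler_norm _))//; rewrite -/M; lra.
have V0 : 0 <= Vol w by apply: sumr_ge0 => i _; exact: deg_ge0.
have rx' : rfun w x' <= rfun w x.
  rewrite !rfunE Nx' ler_pM2r ?invr_gt0 ?mulr_gt0//.
  rewrite /num /x' Jf_trans lerD2r.
  have I1 : Iplus w x <= Iplus w x' + Vol w * `|h|.
    by apply: Iplus_lip => i; apply/eqle; congr `|_|; rewrite /x'; ring.
  have H : ninf x' + `|h| <= ninf x.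
    rewrite nix'; have := ninf_ge x iM; have := ninf_ge x im.
    rewrite -/M -/m /h => H1 H2.
    have := ler_norm M; have := ler_norm (- m); rewrite normrN.
    case: (lerP 0 (M + m)) => hs.
      have -> : `|(M + m) / 2| = (M + m) / 2 by rewrite ger0_norm// divr_ge0.
      lra.
    have -> : `|(M + m) / 2| = - ((M + m) / 2) by rewrite ltr0_norm// pmulr_llt0.
    lra.
  have := ler_wpM2l V0 H; rewrite mulrDr /x'; lra.
have Mm0 : 0 < M - m by rewrite subr_gt0.
pose l := 2 / (M - m).
have l0 : 0 < l by rewrite divr_gt0.
exists (fun i => l * x' i); split.
- by rewrite ninf_scale// nix' /l; field; rewrite gt_eqF.
- apply: le_trans (Nf_lb2 _ iM im) => /=.
  have -> : l * x' iM - l * x' im = 2.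
    by rewrite -mulrBr /x' /l -/M -/m; field; rewrite gt_eqF.
  by rewrite ger0_norm// mulfK.
- by rewrite r_scale.
- apply: shape_scale => //; exists (M - h), (m - h); split; [|split].
  + by split; [exists iM | move=> i; rewrite lerD2r HM].
  + by split; [exists im | move=> i; rewrite lerD2r Hm].
  + by rewrite /h; field.
Qed.

Lemma pn_ge x : ninf x <= pnorm p x.
Proof.
case: p hp => [q| |] //=; rewrite ?lee_fin => q1.
have q0 : 0 < q by lra.
apply: ninf_le; first exact: powR_ge0.
move=> i; rewrite -[X in X <= _](@powRr1 _ `|x i|)// -(divff (negbT (gt_eqF q0))) powRrM.
apply: ge0_ler_powR.
- by rewrite invr_ge0 ltW.
- by rewrite nnegrE powR_ge0.
- by rewrite nnegrE; apply: sumr_ge0 => j _; exact: powR_ge0.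
rewrite (bigD1 i)//= lerDl; apply: sumr_ge0 => j _; exact: powR_ge0.
Qed.

Lemma pn_scale x l : 0 < l -> pnorm p (fun i => l * x i) = l * pnorm p x.
Proof.
move=> l0; case: p hp => [q| |] //=; rewrite ?lee_fin => q1; last exact: ninf_scale.
have q0 : 0 < q by lra.
have -> : \sum_(i < n) `|l * x i| `^ q = l `^ q * \sum_(i < n) `|x i| `^ q.
  rewrite mulr_sumr; apply: eq_bigr => i _.
  by rewrite normrM (gtr0_norm l0) powRM // ltW.
rewrite powRM ?powR_ge0//; last by apply: sumr_ge0 => i _; exact: powR_ge0.
by rewrite -powRrM divff ?gt_eqF// powRr1 // ltW.
Qed.

Lemma pn_zero : pnorm p (fun _ : 'I_n => 0) = 0.
Proof.
have h2 : (0:R) < 2 by [].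
have := pn_scale (fun _ : 'I_n => 0) 2 h2.
have -> : (fun _ : 'I_n => (2 : R) * 0) = (fun _ => 0) by apply: funext => i; rewrite mulr0.
lra.
Qed.

Definition vec (v : 'rV[R]_n) : 'I_n -> R := fun i => v ord0 i.

Lemma vec_row (x : 'I_n -> R) : vec (\row_i x i) = x.
Proof. by apply: funext => i; rewrite /vec mxE. Qed.

Lemma vec_le (u v : 'rV[R]_n) i : `|vec u i - vec v i| <= `|u - v|.
Proof.
have -> : vec u i - vec v i = (u - v) ord0 i by rewrite !mxE.
rewrite [X in _ <= X]/Num.norm /= mx_normrE.
by apply: (@le_bigmax _ _ _ 0 (fun ij : 'I_1 * 'I_n => `|(u - v) ij.1 ij.2|) (ord0, i)).
Qed.

Lemma norm_le_ninf (v : 'rV[R]_n) : `|v| <= ninf (vec v).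
Proof.
rewrite [X in X <= _]/Num.norm /= mx_normrE; apply: bigmax_le; first exact: ninf_ge0.
move=> [i j] _ /=; rewrite (ord1 i); exact: (ninf_ge (vec v) j).
Qed.

Lemma lipc (f : 'rV[R]_n -> R) L : 0 <= L ->
  (forall u v, f u <= f v + L * `|u - v|) -> continuous f.
Proof.
move=> L0 H v; apply/(@cvgrPdist_le _ _ _ (nbhs v) (nbhs_filter v)) => e e0.
rewrite nearE; apply/nbhs_ballP; exists (e / (L + 1)) => /=.
  by rewrite divr_gt0// ltr_wpDl.
move=> t; rewrite -ball_normE /= => vt.
have vt' : L * `|v - t| <= e.
  apply: (le_trans (ler_wpM2l L0 (ltW vt))).
  rewrite mulrA ler_pdivrMr ?ltr_wpDl// mulrC ler_wpM2l ?ltW//; lra.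
have h1 := H v t; have h2 := H t v; rewrite distrC in h2.
rewrite ler_norml; apply/andP; split; lra.
Qed.

Lemma ninf_pos x : nonconstant x -> 0 < ninf x.
Proof.
move=> nc; rewrite lt_def ninf_ge0 andbT; apply/negP => /eqP h0; apply: nc.
by exists 0 => i; apply/eqP; rewrite -normr_le0 -h0 ninf_ge.
Qed.

Lemma omega_pn y : y \in Omega p -> pnorm p y = 1.
Proof. by rewrite in_setE => -[[_ ->]|[_ ->]]. Qed.

Lemma omega_nc y : y \in Omega p -> nonconstant y.
Proof.
move=> Hy [t Ht].
have yE : y = fun _ => t by apply: funext.
have t0 : t = 0.
  move: Hy; rewrite in_setE => -[[[M [m [[[i Hi] _] [[[j Hj] _] HMm]]]] _]|[[[i Hi] _] _]].
    by move: Hi Hj HMm; rewrite !Ht => e1 e2 e3; lra.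
  by move: Hi; rewrite Ht => /normr0_eq0.
by have := omega_pn y Hy; rewrite yE t0 pn_zero => /eqP; rewrite eq_sym oner_eq0.
Qed.

Lemma omega_ninf y : y \in Omega p -> ninf y <= 1.
Proof. by move=> Hy; rewrite -(omega_pn y Hy) pn_ge. Qed.

Lemma to_omega y : nonconstant y -> Shape1 y ->
  exists z, z \in Omega p /\ rfun w z = rfun w y.
Proof.
move=> nc sh; set P := pnorm p y.
have P0 : 0 < P by apply: lt_le_trans (ninf_pos y nc) (pn_ge y).
exists (fun i => P^-1 * y i); split; last by rewrite r_scale ?invr_gt0.
rewrite in_setE; left; split; first by apply: shape_scale; rewrite ?invr_gt0.
by rewrite pn_scale ?invr_gt0// mulVf ?gt_eqF.
Qed.

Lemma Vol_ge0 : 0 <= Vol w.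
Proof. by apply: sumr_ge0 => i _; exact: deg_ge0. Qed.

Lemma sdd_ge0 : 0 <= sdd.
Proof. by apply: sumr_ge0 => i _. Qed.

Definition Dset := [set v : 'rV[R]_n | ninf (vec v) = 1] `&`
                   [set v | dmin <= Nf w (vec v)].
Definition den (v : 'rV[R]_n) := 2 * Num.max (Nf w (vec v)) dmin.
Definition gfun (v : 'rV[R]_n) := num (vec v) * (den v)^-1.

Lemma ninfc : continuous (fun v : 'rV[R]_n => ninf (vec v)).
Proof.
apply: (@lipc _ 1) => // u v; rewrite mul1r.
by apply: ninf_lip => // i; exact: vec_le.
Qed.

Lemma Nfc : continuous (fun v : 'rV[R]_n => Nf w (vec v)).
Proof.
apply: (@lipc _ (Vol w)) => [|u v]; first exact: Vol_ge0.
by apply: Nf_lip => i; exact: vec_le.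
Qed.

Lemma numc : continuous (fun v : 'rV[R]_n => num (vec v)).
Proof.
apply: (@lipc _ (2 * Vol w + sdd)) => [|u v].
  by rewrite addr_ge0 ?mulr_ge0 ?Vol_ge0 ?sdd_ge0.
have h1 := @ninf_lip (vec u) (vec v) _ (normr_ge0 _) (vec_le u v).
have h2 := @Iplus_lip (vec v) (vec u) _ (fun i => le_trans (eqle _ _ (distrC _ _)) (vec_le u v i)).
have h3 := @Jf_lip (vec v) (vec u) _ (fun i => le_trans (eqle _ _ (distrC _ _)) (vec_le u v i)).
have := ler_wpM2l Vol_ge0 h1; rewrite /num !mulrDr !mulrDl; lra.
Qed.

Lemma denc : continuous den.
Proof.
apply: (@lipc _ (2 * Vol w)) => [|u v]; first by rewrite mulr_ge0 ?Vol_ge0.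
have h := @Nf_lip (vec u) (vec v) _ (vec_le u v).
have V0 := Vol_ge0; have d0 : 0 <= Vol w * `|u - v| by rewrite mulr_ge0.
rewrite /den; set a := Num.max (Nf w (vec v)) dmin.
have a1 : Nf w (vec v) <= a by rewrite le_max lexx.
have a2 : dmin <= a by rewrite le_max lexx orbT.
have : Num.max (Nf w (vec u)) dmin <= a + Vol w * `|u - v|.
  by rewrite ge_max; apply/andP; split; lra.
nra.
Qed.

Lemma den_gt0 v : 0 < den v.
Proof.
rewrite /den mulr_gt0// (lt_le_trans dmin_gt0)//.
by rewrite le_max lexx orbT.
Qed.

Lemma gc : continuous gfun.
Proof.
move=> v; apply: (@continuousM R _ (fun v => num (vec v)) (fun v => (den v)^-1) v).
  exact: numc.
by apply: continuousV; [rewrite gt_eqF ?den_gt0 | exact: denc].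
Qed.

Lemma gD v : Dset v -> gfun v = rfun w (vec v).
Proof.
by move=> [_ h]; rewrite /gfun /den rfunE (max_l h).
Qed.

Lemma Dclosed : closed Dset.
Proof.
apply: closedI.
  apply: (@preimage_closed _ _ (fun v : 'rV[R]_n => ninf (vec v)) [set x | x = 1]).
    by move=> v _; exact: ninfc.
  exact: closed_eq.
apply: (@preimage_closed _ _ (fun v : 'rV[R]_n => Nf w (vec v)) [set x | dmin <= x]).
  by move=> v _; exact: Nfc.
exact: closed_ge.
Qed.

Lemma Dbounded : bounded_set Dset.
Proof.
rewrite /= /bounded_near; near=> M.
move=> v [h _] /=.
rewrite (le_trans (norm_le_ninf v))// h.
near: M; apply: nbhs_pinfty_ge; exact: num_real.
Unshelve. all: by end_near. Qed.

Lemma exists_rmin x0 : nonconstant x0 -> exists rmin : R,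
  [/\ (exists z, nonconstant z /\ rfun w z = rmin),
      (forall y, nonconstant y -> rmin <= rfun w y) &
      (exists z, z \in Omega p /\ rfun w z = rmin)].
Proof.
move=> nc0; have [y0 [e1 e2 _ _]] := reduction x0 nc0.
have D0 : Dset !=set0 by exists (\row_i y0 i); split; rewrite /= vec_row.
have [c cD cmin] := EVT_min_rV D0 (bounded_closed_compact Dbounded Dclosed)
  (continuous_subspaceT gc).
rewrite in_setE in cD.
have lb : forall y, nonconstant y -> rfun w (vec c) <= rfun w y.
  move=> y ncy; have [y' [f1 f2 f3 _]] := reduction y ncy.
  have Dy : Dset (\row_i y' i) by split; rewrite /= vec_row.
  have := cmin _ (mem_set Dy); rewrite !gD // vec_row => h.
  exact: le_trans h f3.
have ncc : nonconstant (vec c).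
  by apply: nc_of_Nf; case: cD => _ h; exact: lt_le_trans dmin_gt0 h.
exists (rfun w (vec c)); split => //; first by exists (vec c).
have [y [f1 f2 f3 f4]] := reduction (vec c) ncc.
have ncy : nonconstant y by apply: nc_of_Nf; exact: lt_le_trans dmin_gt0 f2.
have [z [zO zr]] := to_omega y ncy f4.
by exists z; split => //; apply/le_anti; rewrite zr f3 /= lb.
Qed.

Lemma Vol_gt0 (a : 'I_n) : 0 < Vol w.
Proof.
rewrite /Vol (bigD1 a)//= (lt_le_trans (hdeg a))// lerDl.
by apply: sumr_ge0 => i _; exact: deg_ge0.
Qed.

Lemma nc_idx y : nonconstant y -> exists a : 'I_n, True.
Proof. by move=> /(nc_ex y) [a _]; exists a. Qed.

Lemma Qid y r : nonconstant y ->
  ninf y - Qfun w r y = 2 * Nf w y * (rfun w y - r) / Vol w.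
Proof.
move=> nc; have [a _] := nc_idx y nc.
have V0 := Vol_gt0 a; have N0 := Nf_pos y nc.
rewrite /Qfun rfunE /num; field.
by rewrite !gt_eqF ?mulr_gt0.
Qed.

Lemma Nf_le_V y : Nf w y <= Vol w * ninf y.
Proof.
apply: (le_trans (Nf_le y 0)); rewrite /phi /Vol mulr_suml.
apply: ler_sum => i _; rewrite subr0 ler_wpM2l ?deg_ge0//; exact: ninf_ge.
Qed.

Lemma main_conv (x : nat -> 'I_n -> R) :
  x 0%N \in Omega p ->
  (forall k : nat,
     x k.+1 \in Omega p /\
     (forall y, y \in Omega p ->
        ninf (x k.+1) - Qfun w (rfun w (x k)) (x k.+1)
        <= ninf y - Qfun w (rfun w (x k)) y)) ->
  exists rmin : R,
    (exists z : 'I_n -> R, nonconstant z /\ rfun w z = rmin) /\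
    (forall z : 'I_n -> R, nonconstant z -> rmin <= rfun w z) /\
    (fun k => rfun w (x k)) @ \oo --> rmin.
Proof.
move=> h0 hk.
have xO : forall k, x k \in Omega p by case=> [|k] //; case: (hk k).
have xnc : forall k, nonconstant (x k) by move=> k; exact: omega_nc _ (xO k).
have [rmin [Hz Hlb [z [zO zr]]]] := exists_rmin _ (xnc 0%N).
exists rmin; split => //; split => //.
have [a _] := nc_idx _ (xnc 0%N).
have V0 := Vol_gt0 a.
pose r k := rfun w (x k).
have Nk : forall k, 0 < Nf w (x k) by move=> k; exact: Nf_pos _ (xnc k).
have NkV : forall k, Nf w (x k) <= Vol w.
  move=> k; apply: (le_trans (Nf_le_V _)).
  by rewrite ler_piMr ?ninf_ge0 // ?(omega_ninf _ (xO k)) // ltW.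
have ncz := omega_nc z zO.
have Nz := Nf_pos z ncz.
have dec : forall k, r k.+1 <= r k.
  move=> k; have [_ H] := hk k; have := H _ (xO k).
  rewrite !Qid // subrr mulr0 mul0r.
  rewrite pmulr_lle0 ?invr_gt0 // pmulr_rle0 ?mulr_gt0 ?Nk //.
  by rewrite subr_le0.
have step : forall k, Nf w z * (r k - rmin) <= Vol w * (r k - r k.+1).
  move=> k; have [_ H] := hk k; have := H _ zO.
  rewrite !Qid // zr ler_pM2r ?invr_gt0 // -!mulrA ler_pM2l // => h.
  have h1 : 0 <= r k - r k.+1 by rewrite subr_ge0 dec.
  apply: (le_trans (_ : _ <= Nf w (x k.+1) * (r k - r k.+1))).
    by rewrite /r !mulrBr; rewrite !mulrBr in h; lra.
  by rewrite ler_wpM2r.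
have lbk : forall k, rmin <= r k by move=> k; exact: Hlb.
have mono : forall K d, r (K + d)%N <= r K.
  move=> K; elim=> [|d IH]; first by rewrite addn0.
  by rewrite addnS (le_trans (dec _)).
apply/cvgrPdist_le => e e0.
have [K HK] : exists K, r K <= rmin + e.
  apply: contrapT => Hn.
  have gt : forall k, rmin + e < r k.
    by move=> k; rewrite ltNge; apply/negP => h; apply: Hn; exists k.
  pose dl := Nf w z * e / Vol w.
  have dl0 : 0 < dl by rewrite /dl divr_gt0 ?mulr_gt0.
  have st : forall k, dl <= r k - r k.+1.
    move=> k; rewrite /dl ler_pdivrMr // [X in _ <= X]mulrC.
    apply: (le_trans _ (step k)); rewrite ler_pM2l //; have := gt k; lra.
  have ind : forall k, r k <= r 0%N - k%:R * dl.
    elim=> [|k IH]; first by rewrite mul0r subr0.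
    have := st k; rewrite -natr1 mulrDl mul1r; lra.
  have b0 : 0 <= (r 0%N - rmin) / dl by apply: divr_ge0; [rewrite subr_ge0 | exact: ltW].
  have := archi_boundP b0; rewrite ltr_pdivrMr // => hb.
  have := ind (Num.bound ((r 0%N - rmin) / dl)); have := lbk (Num.bound ((r 0%N - rmin) / dl)).
  lra.
exists K => // k /= Kk.
have := mono K (k - K)%N; rewrite subnKC // => h.
rewrite distrC ger0_norm; last by rewrite subr_ge0 lbk.
have := le_trans h HK; rewrite /r; lra.
Qed.
End Main.

Theorem theorem3p1 (R : realType) (n : nat) (w : 'I_n -> 'I_n -> R)
  (p : \bar R) (x : nat -> 'I_n -> R) :
  (forall i j, 0 <= w i j) ->
  (forall v, 0 < deg w v) ->
  (1 <= p)%E ->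
  x 0%N \in Omega p ->
  (forall k : nat,
     x k.+1 \in Omega p /\
     (forall y, y \in Omega p ->
        ninf (x k.+1) - Qfun w (rfun w (x k)) (x k.+1)
        <= ninf y - Qfun w (rfun w (x k)) y)) ->
  exists rmin : R,
    (exists z : 'I_n -> R, nonconstant z /\ rfun w z = rmin) /\
    (forall z : 'I_n -> R, nonconstant z -> rmin <= rfun w z) /\
    (fun k => rfun w (x k)) @ \oo --> rmin.
Proof.
move=> hw hdeg hp h0 hk.
exact: (@main_conv R n w p hp hw hdeg x h0 hk).
Qed.
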